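(* Let $K\subseteq\mathbb{R}^d$ be compact, let $f\in C^1(K)$ and let $df:K\to\mathbb{R}^d$ be a continuous derivative of $f$ on $K$. Then for every rectifiable path $\gamma:[a,b]\to K$, $$\int_\gamma df=f(\gamma(b))-f(\gamma(a)).$$
   Context: A function $df:K\to\mathbb{R}^d$ (identifying linear functionals on $\mathbb{R}^d$ with vectors via the scalar product $\langle\cdot,\cdot\rangle$) is a derivative of $f:K\to\mathbb{R}$ on $K$ if for every $x\in K$, $\lim_{y\to x,\,y\in K\setminus\{x\}}\frac{f(y)-f(x)-\langle df(x),y-x\rangle}{|y-x|}=0$. $C^1(K)$ is the set of $f:K\to\mathbb{R}$ admitting a continuous derivative on $K$. A path $\gamma:[a,b]\to K$ is a continuous map; its length is $L(\gamma)=\sup\{\sum_{j=1}^n|\gamma(t_j)-\gamma(t_{j-1})|: a=t_0<\dots<t_n=b\}$, and $\gamma$ is rectifiable if $L(\gamma)<\infty$. For continuous $F:K\to\mathbb{R}^d$ and rectifiable $\gamma$, the path integral $\int_\gamma F$ is the limit of the Riemann–Stieltjes sums $\sum_{j=1}^n\langle F(\gamma(\tau_j)),\gamma(t_j)-\gamma(t_{j-1})\rangle$ over partitions $a=t_0<\dots<t_n=b$ with mesh tending to $0$ and $t_{j-1}\le\tau_j\le t_j$. *)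

(* Defs.v *)
From Stdlib Require Import Reals Lra.
Open Scope R_scope.

(** Points of R^d: real sequences vanishing from index d on
    (so that equality of points is equality of their d coordinates). *)
Definition vec (d : nat) : Type :=
  { x : nat -> R | forall i : nat, (d <= i)%nat -> x i = 0 }.

Definition coord {d : nat} (x : vec d) : nat -> R := proj1_sig x.

Fixpoint sum_lt (n : nat) (g : nat -> R) : R :=
  match n with
  | O => 0
  | S m => sum_lt m g + g m
  end.

Definition dotR (d : nat) (u v : nat -> R) : R := sum_lt d (fun i => u i * v i).
Definition normR (d : nat) (u : nat -> R) : R := sqrt (dotR d u u).

Definition vdiff {d : nat} (y x : vec d) : nat -> R := fun i => coord y i - coord x i.

Definition dist {d : nat} (x y : vec d) : R := normR d (vdiff y x).

Definition compactK {d : nat} (K : vec d -> Prop) : Prop :=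
  forall u : nat -> vec d, (forall n, K (u n)) ->
  exists (phi : nat -> nat) (l : vec d),
    (forall n m, (n < m)%nat -> (phi n < phi m)%nat) /\ K l /\
    (forall eps, eps > 0 -> exists N, forall n, (N <= n)%nat -> dist (u (phi n)) l < eps).

Definition continuous_on {d : nat} (K : vec d -> Prop) (F : vec d -> vec d) : Prop :=
  forall x, K x -> forall eps, eps > 0 -> exists delta, delta > 0 /\
    forall y, K y -> dist x y < delta -> dist (F x) (F y) < eps.

Definition is_derivative {d : nat} (K : vec d -> Prop) (f : vec d -> R)
  (df : vec d -> vec d) : Prop :=
  forall x, K x -> forall eps, eps > 0 -> exists delta, delta > 0 /\
    forall y, K y -> y <> x -> dist x y < delta ->
      Rabs ((f y - f x - dotR d (coord (df x)) (vdiff y x)) / dist x y) < eps.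

Definition in_C1 {d : nat} (K : vec d -> Prop) (f : vec d -> R) : Prop :=
  exists df, is_derivative K f df /\ continuous_on K df.

Definition is_path {d : nat} (K : vec d -> Prop) (gamma : R -> vec d) (a b : R) : Prop :=
  a < b /\
  (forall t, a <= t <= b -> K (gamma t)) /\
  (forall t, a <= t <= b -> forall eps, eps > 0 -> exists delta, delta > 0 /\
     forall s, a <= s <= b -> Rabs (s - t) < delta -> dist (gamma t) (gamma s) < eps).

Definition is_partition (a b : R) (n : nat) (t : nat -> R) : Prop :=
  t O = a /\ t n = b /\ (forall j, (j < n)%nat -> t j < t (S j)).

Definition poly_length {d : nat} (gamma : R -> vec d) (n : nat) (t : nat -> R) : R :=
  sum_lt n (fun j => dist (gamma (t j)) (gamma (t (S j)))).

Definition rectifiable {d : nat} (gamma : R -> vec d) (a b : R) : Prop :=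
  exists M, forall n t, is_partition a b n t -> poly_length gamma n t <= M.

(** Riemann--Stieltjes sum sum_{j=1}^n <F(gamma(tau_j)), gamma(t_j) - gamma(t_{j-1})>,
    with tau (S j) the tag of [t j, t (S j)]. *)
Definition RS_sum {d : nat} (F : vec d -> vec d) (gamma : R -> vec d)
  (n : nat) (t tau : nat -> R) : R :=
  sum_lt n (fun j => dotR d (coord (F (gamma (tau (S j)))))
                            (vdiff (gamma (t (S j))) (gamma (t j)))).

Definition is_path_integral {d : nat} (F : vec d -> vec d) (gamma : R -> vec d)
  (a b : R) (I : R) : Prop :=
  forall eps, eps > 0 -> exists delta, delta > 0 /\
    forall n t tau, is_partition a b n t ->
      (forall j, (j < n)%nat -> t (S j) - t j < delta) ->
      (forall j, (j < n)%nat -> t j <= tau (S j) <= t (S j)) ->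
      Rabs (RS_sum F gamma n t tau - I) < eps.

(* Main.v *)
Require Import Defs.
From Stdlib Require Import Reals Lra Lia Classical ProofIrrelevance FunctionalExtensionality.
Import Defs.
Open Scope R_scope.

Lemma Rabs_lt_iff x e : Rabs x < e <-> -e < x < e.
Proof. unfold Rabs; destruct (Rcase_abs x); split; intros; lra. Qed.
Lemma Rabs_le_iff x e : Rabs x <= e <-> -e <= x <= e.
Proof. unfold Rabs; destruct (Rcase_abs x); split; intros; lra. Qed.

Lemma sum_lt_ext n g h : (forall j, (j < n)%nat -> g j = h j) -> sum_lt n g = sum_lt n h.
Proof. induction n; simpl; intros H; auto. rewrite IHn, H; auto; intros; apply H; lia. Qed.

Lemma sum_lt_plus n g h : sum_lt n (fun j => g j + h j) = sum_lt n g + sum_lt n h.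
Proof. induction n; simpl; [lra|]. rewrite IHn; lra. Qed.
Lemma sum_lt_minus n g h : sum_lt n (fun j => g j - h j) = sum_lt n g - sum_lt n h.
Proof. induction n; simpl; [lra|]. rewrite IHn; lra. Qed.
Lemma sum_lt_scal n c g : sum_lt n (fun j => c * g j) = c * sum_lt n g.
Proof. induction n; simpl; [lra|]. rewrite IHn; lra. Qed.
Lemma sum_lt_le n g h : (forall j, (j < n)%nat -> g j <= h j) -> sum_lt n g <= sum_lt n h.
Proof. induction n; simpl; intros H; [lra|]. assert (H1 := H n (Nat.lt_succ_diag_r n)).
  assert (sum_lt n g <= sum_lt n h) by (apply IHn; intros; apply H; lia). lra. Qed.
Lemma sum_lt_nonneg n g : (forall j, (j < n)%nat -> 0 <= g j) -> 0 <= sum_lt n g.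
Proof. intros H. replace 0 with (sum_lt n (fun _ => 0)). apply sum_lt_le; auto.
  induction n; simpl; auto. rewrite IHn; [lra|]. intros; apply H; lia. Qed.
Lemma sum_lt_abs n g : Rabs (sum_lt n g) <= sum_lt n (fun j => Rabs (g j)).
Proof. induction n; simpl. rewrite Rabs_R0; lra.
  eapply Rle_trans; [apply Rabs_triang|]. lra. Qed.
Lemma sum_lt_tele n g : sum_lt n (fun j => g (S j) - g j) = g n - g O.
Proof. induction n; simpl; [lra|]. rewrite IHn; lra. Qed.
Lemma sum_lt_nonneg_zero n g : (forall j, (j < n)%nat -> 0 <= g j) -> sum_lt n g = 0 ->
  forall j, (j < n)%nat -> g j = 0.
Proof. induction n; simpl; intros H Hs j Hj; [lia|].
  assert (0 <= sum_lt n g) by (apply sum_lt_nonneg; intros; apply H; lia).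
  assert (0 <= g n) by (apply H; lia).
  destruct (Nat.eq_dec j n). subst; lra.
  apply IHn; try lra; try lia. intros; apply H; lia. Qed.

Lemma dot_minus_r d u v w : dotR d u (fun i => v i - w i) = dotR d u v - dotR d u w.
Proof. unfold dotR. rewrite <- sum_lt_minus. apply sum_lt_ext; intros; ring. Qed.
Lemma dot_minus_l d u v w : dotR d (fun i => v i - w i) u = dotR d v u - dotR d w u.
Proof. unfold dotR. rewrite <- sum_lt_minus. apply sum_lt_ext; intros; ring. Qed.
Lemma dot_self_nonneg d u : 0 <= dotR d u u.
Proof. apply sum_lt_nonneg; intros; nra. Qed.

Lemma quad d u v lam : dotR d (fun i => u i - lam * v i) (fun i => u i - lam * v i)
  = dotR d u u - 2 * lam * dotR d u v + lam * lam * dotR d v v.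
Proof. unfold dotR. rewrite <- !sum_lt_scal, <- sum_lt_minus, <- sum_lt_plus.
  apply sum_lt_ext; intros; ring. Qed.

Lemma CS2 d u v : dotR d u v * dotR d u v <= dotR d u u * dotR d v v.
Proof.
  set (A := dotR d u u); set (B := dotR d u v); set (C := dotR d v v).
  assert (HQ : forall lam, 0 <= A - 2 * lam * B + lam * lam * C).
  { intros lam. unfold A, B, C; rewrite <- quad. apply dot_self_nonneg. }
  assert (HA : 0 <= A) by apply dot_self_nonneg.
  assert (HC : 0 <= C) by apply dot_self_nonneg.
  destruct (Req_dec C 0) as [H0|H0].
  - destruct (Req_dec B 0) as [HB|HB]. rewrite HB; nra.
    specialize (HQ ((A + 1) / (2 * B))). rewrite H0 in HQ.
    replace (2 * ((A + 1) / (2 * B)) * B) with (A + 1) in HQ by (field; auto). nra.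
  - specialize (HQ (B / C)).
    replace (A - 2 * (B / C) * B + B / C * (B / C) * C) with ((A * C - B * B) / C) in HQ
      by (field; auto).
    assert (0 < C) by lra.
    assert (0 <= A * C - B * B).
    { destruct (Rle_lt_dec 0 (A * C - B * B)); auto.
      exfalso. assert ((A * C - B * B) / C < 0). { apply Rdiv_neg_pos; auto. } lra. }
    lra.
Qed.

Lemma CS d u v : Rabs (dotR d u v) <= normR d u * normR d v.
Proof.
  unfold normR. rewrite <- sqrt_mult by apply dot_self_nonneg.
  rewrite <- sqrt_Rsqr_abs. apply sqrt_le_1_alt. unfold Rsqr. apply CS2. Qed.

Lemma normR_nonneg d u : 0 <= normR d u.
Proof. apply sqrt_pos. Qed.

Lemma normR_ext d u v : (forall i, u i = v i) -> normR d u = normR d v.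
Proof. intros H. unfold normR, dotR. f_equal. apply sum_lt_ext; intros; rewrite !H; auto. Qed.

Lemma normR_triang d u v : normR d (fun i => u i + v i) <= normR d u + normR d v.
Proof.
  unfold normR.
  assert (E : dotR d (fun i => u i + v i) (fun i => u i + v i)
     = dotR d u u + 2 * dotR d u v + dotR d v v).
  { unfold dotR. rewrite <- sum_lt_scal, <- !sum_lt_plus. apply sum_lt_ext; intros; ring. }
  rewrite E.
  assert (HA := dot_self_nonneg d u). assert (HC := dot_self_nonneg d v).
  assert (H := CS d u v). unfold normR in H.
  assert (Hs := sqrt_pos (dotR d u u)). assert (Hs2 := sqrt_pos (dotR d v v)).
  rewrite <- (sqrt_square (sqrt (dotR d u u) + sqrt (dotR d v v))) by lra.
  apply sqrt_le_1_alt.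
  assert (e1 := sqrt_sqrt _ HA). assert (e2 := sqrt_sqrt _ HC).
  apply Rabs_le_iff in H. nra.
Qed.

Lemma dist_nonneg d (x y : vec d) : 0 <= dist x y.
Proof. apply normR_nonneg. Qed.

Lemma dist_sym d (x y : vec d) : dist x y = dist y x.
Proof. unfold dist, normR, dotR, vdiff. f_equal. apply sum_lt_ext; intros; ring. Qed.

Lemma dist_self d (x : vec d) : dist x x = 0.
Proof. unfold dist, normR, dotR, vdiff.
  rewrite <- sqrt_0. f_equal. rewrite (sum_lt_ext _ _ (fun _ => 0 * 0)).
  2: intros; ring. rewrite sum_lt_scal; ring. Qed.

Lemma dist_triang d (x y z : vec d) : dist x z <= dist x y + dist y z.
Proof. unfold dist. rewrite Rplus_comm.
  rewrite (normR_ext d (vdiff z x) (fun i => vdiff z y i + vdiff y x i)).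
  apply normR_triang. intros; unfold vdiff; ring. Qed.

Lemma dist_eq0 d (x y : vec d) : dist x y = 0 -> x = y.
Proof.
  intros H. unfold dist, normR in H. apply sqrt_eq_0 in H; [|apply dot_self_nonneg].
  assert (Hz := sum_lt_nonneg_zero d _ (fun j _ => Rle_0_sqr _) H).
  destruct x as [x hx], y as [y hy]. unfold vdiff, coord in Hz; simpl in Hz.
  assert (x = y).
  { apply functional_extensionality; intros i. destruct (Nat.lt_ge_cases i d).
    specialize (Hz i H0). unfold Rsqr in Hz. nra. rewrite hx, hy; auto. }
  subst. f_equal. apply proof_irrelevance.
Qed.

Lemma dot_zero_r d u : dotR d u (fun _ => 0) = 0.
Proof. unfold dotR. rewrite (sum_lt_ext _ _ (fun _ => 0 * 0)). rewrite sum_lt_scal; ring.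
  intros; ring. Qed.

Lemma local_global (psi G : R -> R) u v : u <= v ->
  (forall s, u <= s <= v -> exists delta, delta > 0 /\ forall s', u <= s' <= v -> Rabs (s' - s) < delta ->
     (s <= s' -> Rabs (psi s' - psi s) <= G s' - G s) /\
     (s' <= s -> Rabs (psi s - psi s') <= G s - G s')) ->
  Rabs (psi v - psi u) <= G v - G u.
Proof.
  intros huv Hloc.
  set (E := fun w => u <= w <= v /\ Rabs (psi w - psi u) <= G w - G u).
  assert (Eu : E u). { split; [lra|]. replace (psi u - psi u) with 0 by ring. rewrite Rabs_R0; lra. }
  assert (Hb : bound E). { exists v. intros x [hx _]; lra. }
  destruct (completeness E Hb (ex_intro _ u Eu)) as [m [Hub Hl]].
  assert (hum : u <= m) by (apply Hub; auto).
  assert (hmv : m <= v) by (apply Hl; intros x [hx _]; lra).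
  destruct (Hloc m (conj hum hmv)) as [del [hdel Hd]].
  assert (Ew : exists w, E w /\ m - del < w).
  { apply NNPP; intros Hn. assert (m <= m - del); [|lra].
    apply Hl. intros x Ex. apply Rnot_lt_le; intros hx. apply Hn; exists x; split; auto; lra. }
  destruct Ew as [w [Ew hw]].
  assert (hwm : w <= m) by (apply Hub; auto).
  assert (Em : E m).
  { destruct Ew as [hw1 hw2]. split; [lra|].
    destruct (Hd w ltac:(lra) ltac:(apply Rabs_lt_iff; lra)) as [_ H2].
    specialize (H2 hwm).
    replace (psi m - psi u) with ((psi m - psi w) + (psi w - psi u)) by ring.
    eapply Rle_trans; [apply Rabs_triang|]. lra. }
  destruct (Rle_lt_dec v m) as [hv|hv].
  - replace v with m by lra. apply Em.
  - exfalso.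
    set (w' := Rmin v (m + del / 2)).
    assert (h1 : m < w' <= v) by (unfold w', Rmin; destruct (Rle_dec v (m + del/2)); lra).
    assert (h2 : w' <= m + del / 2) by (unfold w', Rmin; destruct (Rle_dec v (m + del/2)); lra).
    assert (Ew' : E w').
    { destruct Em as [_ Hm]. split; [lra|].
      destruct (Hd w' ltac:(lra) ltac:(apply Rabs_lt_iff; lra)) as [H1 _].
      specialize (H1 ltac:(lra)).
      replace (psi w' - psi u) with ((psi w' - psi m) + (psi m - psi u)) by ring.
      eapply Rle_trans; [apply Rabs_triang|]. lra. }
    assert (w' <= m) by (apply Hub; auto). lra.
Qed.

Lemma unif_cont d (g : R -> vec d) a b : a <= b ->
  (forall t, a <= t <= b -> forall eps, eps > 0 -> exists delta, delta > 0 /\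
     forall s, a <= s <= b -> Rabs (s - t) < delta -> dist (g t) (g s) < eps) ->
  forall eps, eps > 0 -> exists delta, delta > 0 /\ forall s s', a <= s <= b -> a <= s' <= b ->
     Rabs (s - s') < delta -> dist (g s) (g s') < eps.
Proof.
  intros hab Hc eps heps.
  set (Q := fun w => a <= w <= b /\ exists delta, delta > 0 /\ forall s s', a <= s <= w -> a <= s' <= w ->
     Rabs (s - s') < delta -> dist (g s) (g s') < eps).
  assert (Qa : Q a).
  { split; [lra|]. exists 1; split; [lra|]. intros s s' hs hs' _.
    replace s with a by lra. replace s' with a by lra. rewrite dist_self; lra. }
  assert (Hb : bound Q). { exists b. intros x [hx _]; lra. }
  destruct (completeness Q Hb (ex_intro _ a Qa)) as [m [Hub Hl]].
  assert (ham : a <= m) by (apply Hub; auto).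
  assert (hmb : m <= b) by (apply Hl; intros x [hx _]; lra).
  destruct (Hc m (conj ham hmb) (eps / 2) ltac:(lra)) as [del [hdel Hd]].
  assert (Ew : exists w, Q w /\ m - del / 2 < w).
  { apply NNPP; intros Hn. assert (m <= m - del / 2); [|lra].
    apply Hl. intros x Ex. apply Rnot_lt_le; intros hx. apply Hn; exists x; split; auto; lra. }
  destruct Ew as [w [[hw1 [dw [hdw Hw]]] hw]].
  assert (hwm : w <= m) by (apply Hub; split; auto; exists dw; auto).
  assert (claim : forall w', m <= w' <= b -> w' <= m + del / 2 -> Q w').
  { intros w' h1 h2. split; [lra|]. exists (Rmin dw (del / 2)). split.
    { apply Rmin_glb_lt; lra. }
    intros s s' hs hs' hss.
    assert (hr1 : Rabs (s - s') < dw) by (eapply Rlt_le_trans; [apply hss | apply Rmin_l]).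
    assert (hr2 : Rabs (s - s') < del / 2) by (eapply Rlt_le_trans; [apply hss | apply Rmin_r]).
    apply Rabs_lt_iff in hr2.
    destruct (Rle_dec s w), (Rle_dec s' w).
    - apply Hw; auto; lra.
    - eapply Rle_lt_trans; [apply (dist_triang _ _ (g m))|].
      rewrite dist_sym.
      assert (dist (g m) (g s) < eps / 2) by (apply Hd; [lra | apply Rabs_lt_iff; lra]).
      assert (dist (g m) (g s') < eps / 2) by (apply Hd; [lra | apply Rabs_lt_iff; lra]).
      lra.
    - eapply Rle_lt_trans; [apply (dist_triang _ _ (g m))|].
      rewrite dist_sym.
      assert (dist (g m) (g s) < eps / 2) by (apply Hd; [lra | apply Rabs_lt_iff; lra]).
      assert (dist (g m) (g s') < eps / 2) by (apply Hd; [lra | apply Rabs_lt_iff; lra]).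
      lra.
    - eapply Rle_lt_trans; [apply (dist_triang _ _ (g m))|].
      rewrite dist_sym.
      assert (dist (g m) (g s) < eps / 2) by (apply Hd; [lra | apply Rabs_lt_iff; lra]).
      assert (dist (g m) (g s') < eps / 2) by (apply Hd; [lra | apply Rabs_lt_iff; lra]).
      lra. }
  destruct (Rle_dec b (m + del / 2)).
  - destruct (claim b ltac:(lra) r) as [_ [dl [hdl Hdl]]].
    exists dl; split; auto.
  - assert (Qm : Q (m + del / 2)) by (apply claim; lra).
    assert (m + del / 2 <= m) by (apply Hub; auto). lra.
Qed.

Lemma part_mono a b n t : is_partition a b n t -> forall j k, (j <= k <= n)%nat -> t j <= t k.
Proof.
  intros [h0 [hn hinc]] j k. induction k; intros hk.
  - replace j with O by lia. lra.
  - destruct (Nat.eq_dec j (S k)). subst; lra.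
    assert (t j <= t k) by (apply IHk; lia). assert (t k < t (S k)) by (apply hinc; lia). lra.
Qed.

Lemma part_in a b n t : is_partition a b n t -> forall j, (j <= n)%nat -> a <= t j <= b.
Proof.
  intros Hp j hj. pose proof Hp as [h0 [hn hinc]]. split.
  rewrite <- h0. apply (part_mono a b n t Hp); lia.
  rewrite <- hn. apply (part_mono a b n t Hp); lia.
Qed.

Definition ext (t : nat -> R) (n : nat) (w : R) : nat -> R :=
  fun j => if Nat.leb j n then t j else w.

Lemma part_ext d (gamma : R -> vec d) a w w' n t : is_partition a w n t -> w < w' ->
  is_partition a w' (S n) (ext t n w') /\
  poly_length gamma (S n) (ext t n w') = poly_length gamma n t + dist (gamma w) (gamma w').
Proof.
  intros [h0 [hn hinc]] hw. unfold ext. split; [split; [|split]|].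
  - simpl. auto.
  - rewrite (proj2 (Nat.leb_gt (S n) n)) by lia. auto.
  - intros j hj. destruct (Nat.eq_dec j n).
    + subst. rewrite Nat.leb_refl, (proj2 (Nat.leb_gt (S n) n)) by lia. lra.
    + rewrite (proj2 (Nat.leb_le j n)) by lia. rewrite (proj2 (Nat.leb_le (S j) n)) by lia.
      apply hinc; lia.
  - unfold poly_length. assert (E1 : (S n <=? n)%nat = false) by (apply Nat.leb_gt; lia).
    cbn [sum_lt]. rewrite Nat.leb_refl, E1.
    rewrite hn. f_equal. apply sum_lt_ext. intros j hj.
    rewrite (proj2 (Nat.leb_le j n)) by lia. rewrite (proj2 (Nat.leb_le (S j) n)) by lia. auto.
Qed.

Lemma part_exists a w : a <= w -> exists n t, is_partition a w n t.
Proof.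
  intros h. destruct (Req_dec a w).
  - exists O, (fun _ => a). split; [auto|split; [auto|intros; lia]].
  - exists 1%nat, (fun j => match j with O => a | _ => w end).
    split; [auto|split; [auto|]]. intros j hj. replace j with O by lia. lra.
Qed.

Lemma Lam_exists d (gamma : R -> vec d) a b : a < b -> rectifiable gamma a b ->
  exists (Lam : R -> R) M, 0 <= M /\
    (forall w w', a <= w -> w <= w' -> w' <= b -> Lam w + dist (gamma w) (gamma w') <= Lam w') /\
    0 <= Lam a /\ Lam b <= M.
Proof.
  intros hab [M HM].
  set (E := fun w x => (x = 0 /\ ~ (a <= w <= b)) \/
     (a <= w <= b /\ exists n t, is_partition a w n t /\ x = poly_length gamma n t)).
  assert (Hbd : forall w x, E w x -> x <= Rmax 0 M).
  { intros w x [[-> _] | [hw [n [t [Hp ->]]]]]. apply Rmax_l.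
    eapply Rle_trans; [|apply Rmax_r].
    destruct (Req_dec w b). subst w; apply HM; auto.
    destruct (part_ext d gamma a w b n t Hp ltac:(lra)) as [Hp' Hl].
    specialize (HM _ _ Hp'). rewrite Hl in HM. assert (H0 := dist_nonneg d (gamma w) (gamma b)). lra. }
  assert (HB : forall w, bound (E w)). { intros w. exists (Rmax 0 M). intros x; apply Hbd. }
  assert (HN : forall w, exists x, E w x).
  { intros w. destruct (classic (a <= w <= b)) as [h|h].
    - destruct (part_exists a w ltac:(lra)) as [n [t Hp]].
      exists (poly_length gamma n t). right. split; auto. exists n, t; auto.
    - exists 0. left; auto. }
  exists (fun w => proj1_sig (completeness (E w) (HB w) (HN w))), (Rmax 0 M).
  split; [apply Rmax_l|]. split; [|split].
  - intros w w' h1 h2 h3.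
    destruct (completeness (E w) (HB w) (HN w)) as [l [Hub Hl]]; simpl.
    destruct (completeness (E w') (HB w') (HN w')) as [l' [Hub' Hl']]; simpl.
    assert (l <= l' - dist (gamma w) (gamma w')); [|lra].
    apply Hl. intros x [[_ hn] | [hw [n [t [Hp ->]]]]]. exfalso; apply hn; lra.
    destruct (Req_dec w w').
    + subst w'. rewrite dist_self. assert (poly_length gamma n t <= l').
      apply Hub'. right. split; auto. exists n, t; auto. lra.
    + destruct (part_ext d gamma a w w' n t Hp ltac:(lra)) as [Hp' Hl2].
      assert (poly_length gamma (S n) (ext t n w') <= l').
      { apply Hub'. right. split; [lra|]. exists (S n), (ext t n w'); auto. }
      lra.
  - destruct (completeness (E a) (HB a) (HN a)) as [l [Hub Hl]]; simpl.
    apply Hub. right. split; [lra|]. exists O, (fun _ => a).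
    split; [split; [auto|split; [auto|intros; lia]]|]. reflexivity.
  - destruct (completeness (E b) (HB b) (HN b)) as [l [Hub Hl]]; simpl.
    apply Hl. intros x; apply Hbd.
Qed.

Lemma deriv_bound d (K : vec d -> Prop) f df x eps : is_derivative K f df -> K x -> eps > 0 ->
  exists delta, delta > 0 /\ forall y, K y -> dist x y < delta ->
    Rabs (f y - f x - dotR d (coord (df x)) (vdiff y x)) <= eps * dist x y.
Proof.
  intros Hd Kx he. destruct (Hd x Kx eps he) as [del [hdel H]].
  exists del; split; auto. intros y Ky hy.
  destruct (classic (y = x)) as [->|hne].
  - rewrite dist_self. unfold vdiff.
    replace (dotR d (coord (df x)) (fun i => coord x i - coord x i)) with 0.
    replace (f x - f x - 0) with 0 by ring. rewrite Rabs_R0; lra.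
    rewrite <- (dot_zero_r d (coord (df x))). unfold dotR. apply sum_lt_ext; intros; ring_simplify; auto.
  - specialize (H y Ky hne hy).
    assert (hD : dist x y <> 0) by (intros h0; apply hne; symmetry; apply dist_eq0; auto).
    assert (hD' : 0 < dist x y) by (assert (H0 := dist_nonneg d x y); lra).
    set (N := f y - f x - dotR d (coord (df x)) (vdiff y x)) in *.
    replace N with (N / dist x y * dist x y) by (field; auto).
    rewrite Rabs_mult, (Rabs_right (dist x y)) by lra.
    apply Rmult_le_compat_r; lra.
Qed.

Lemma key d (K : vec d -> Prop) f df gamma a b (Lam : R -> R) eta u v c :
  is_derivative K f df -> is_path K gamma a b ->
  (forall w w', a <= w -> w <= w' -> w' <= b -> Lam w + dist (gamma w) (gamma w') <= Lam w') ->
  eta > 0 -> a <= u -> u <= v -> v <= b ->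
  (forall s, u <= s <= v -> dist c (df (gamma s)) <= eta) ->
  Rabs (f (gamma v) - f (gamma u) - dotR d (coord c) (vdiff (gamma v) (gamma u)))
    <= 2 * eta * (Lam v - Lam u).
Proof.
  intros Hd [hab [HK Hg]] HL he hau huv hvb Hc.
  set (psi := fun s => f (gamma s) - dotR d (coord c) (coord (gamma s))).
  replace (f (gamma v) - f (gamma u) - dotR d (coord c) (vdiff (gamma v) (gamma u)))
    with (psi v - psi u)
    by (unfold psi, vdiff; rewrite dot_minus_r; ring).
  replace (2 * eta * (Lam v - Lam u)) with ((fun s => 2 * eta * Lam s) v - (fun s => 2 * eta * Lam s) u)
    by (simpl; ring).
  apply (local_global psi (fun s => 2 * eta * Lam s) u v); auto.
  intros s hs.
  assert (hsab : a <= s <= b) by lra.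
  destruct (deriv_bound d K f df (gamma s) eta Hd (HK s hsab) he) as [d1 [hd1 H1]].
  destruct (Hg s hsab d1 hd1) as [d2 [hd2 H2]].
  exists d2. split; auto. intros s' hs' hss'.
  assert (hs'ab : a <= s' <= b) by lra.
  assert (Hb : Rabs (psi s' - psi s) <= 2 * eta * dist (gamma s) (gamma s')).
  { specialize (H1 (gamma s') (HK s' hs'ab) (H2 s' hs'ab hss')).
    assert (E : psi s' - psi s =
       (f (gamma s') - f (gamma s) - dotR d (coord (df (gamma s))) (vdiff (gamma s') (gamma s)))
       + dotR d (vdiff (df (gamma s)) c) (vdiff (gamma s') (gamma s))).
    { unfold psi, vdiff. rewrite dot_minus_l, !dot_minus_r. ring. }
    rewrite E. eapply Rle_trans; [apply Rabs_triang|].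
    assert (H3 := CS d (vdiff (df (gamma s)) c) (vdiff (gamma s') (gamma s))).
    fold (dist c (df (gamma s))) in H3. fold (dist (gamma s) (gamma s')) in H3.
    assert (H4 := Hc s hs). assert (H5 := dist_nonneg d (gamma s) (gamma s')).
    assert (H6 := dist_nonneg d c (df (gamma s))).
    assert (dist c (df (gamma s)) * dist (gamma s) (gamma s') <= eta * dist (gamma s) (gamma s'))
      by (apply Rmult_le_compat_r; auto).
    lra. }
  split; intros hle.
  - assert (HL1 := HL s s' ltac:(lra) hle ltac:(lra)). nra.
  - rewrite Rabs_minus_sym. rewrite dist_sym in Hb.
    assert (HL1 := HL s' s ltac:(lra) hle ltac:(lra)). nra.
Qed.

Theorem mainTheorem2 (d : nat) (K : vec d -> Prop) (f : vec d -> R)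
  (df : vec d -> vec d)
  (HK : compactK K) (Hf : in_C1 K f)
  (Hdf : is_derivative K f df) (Hdfc : continuous_on K df)
  (gamma : R -> vec d) (a b : R)
  (Hpath : is_path K gamma a b) (Hrect : rectifiable gamma a b) :
  is_path_integral df gamma a b (f (gamma b) - f (gamma a)).
Proof.
  pose proof Hpath as [hab [HKg Hg]].
  destruct (Lam_exists d gamma a b hab Hrect) as [Lam [M [hM [HL [hLa hLb]]]]].
  intros eps heps.
  set (eta := eps / (3 * (M + 1))).
  assert (heta : eta > 0) by (unfold eta; apply Rdiv_lt_0_compat; lra).
  assert (heta3 : 3 * eta * (M + 1) = eps) by (unfold eta; field; lra).
  assert (Hc : forall t, a <= t <= b -> forall e, e > 0 -> exists delta, delta > 0 /\
     forall s, a <= s <= b -> Rabs (s - t) < delta -> dist (df (gamma t)) (df (gamma s)) < e).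
  { intros t ht e he. destruct (Hdfc (gamma t) (HKg t ht) e he) as [d1 [hd1 H1]].
    destruct (Hg t ht d1 hd1) as [d2 [hd2 H2]].
    exists d2; split; auto. }
  destruct (unif_cont d (fun s => df (gamma s)) a b ltac:(lra) Hc eta heta) as [del [hdel Hu]].
  exists del. split; auto.
  intros n t tau Hp Hmesh Htag.
  assert (Hin := part_in a b n t Hp).
  destruct Hp as [h0 [hn hinc]].
  unfold RS_sum.
  replace (f (gamma b) - f (gamma a)) with
    (sum_lt n (fun j => f (gamma (t (S j))) - f (gamma (t j)))).
  2:{ rewrite (sum_lt_tele n (fun j => f (gamma (t j)))). rewrite hn, h0. auto. }
  rewrite <- sum_lt_minus.
  eapply Rle_lt_trans; [apply sum_lt_abs|].
  apply Rle_lt_trans with (sum_lt n (fun j => 3 * eta * (Lam (t (S j)) - Lam (t j)))).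
  - apply sum_lt_le. intros j hj.
    set (u := t j). set (v := t (S j)).
    assert (hu := Hin j ltac:(lia)). assert (hv := Hin (S j) ltac:(lia)).
    fold u in hu; fold v in hv.
    assert (huv : u < v) by (apply hinc; auto).
    assert (hm : v - u < del) by (apply Hmesh; auto).
    assert (htj := Htag j hj). fold u v in htj.
    assert (Hk := key d K f df gamma a b Lam eta u v (df (gamma u)) Hdf Hpath HL heta
      ltac:(lra) ltac:(lra) ltac:(lra)
      ltac:(intros s hs; left; apply Hu; [lra|lra|apply Rabs_lt_iff; lra])).
    set (tj := tau (S j)) in *.
    assert (Htau : dist (df (gamma u)) (df (gamma tj)) < eta)
      by (apply Hu; [lra|lra|apply Rabs_lt_iff; lra]).
    assert (H3 := CS d (vdiff (df (gamma tj)) (df (gamma u))) (vdiff (gamma v) (gamma u))).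
    fold (dist (df (gamma u)) (df (gamma tj))) in H3. fold (dist (gamma u) (gamma v)) in H3.
    assert (HL1 := HL u v ltac:(lra) ltac:(lra) ltac:(lra)).
    assert (H5 := dist_nonneg d (gamma u) (gamma v)).
    assert (H6 := dist_nonneg d (df (gamma u)) (df (gamma tj))).
    assert (H7 : dist (df (gamma u)) (df (gamma tj)) * dist (gamma u) (gamma v) <= eta * dist (gamma u) (gamma v))
      by (apply Rmult_le_compat_r; lra).
    assert (E : dotR d (coord (df (gamma tj))) (vdiff (gamma v) (gamma u)) -
                (f (gamma v) - f (gamma u)) =
       - (f (gamma v) - f (gamma u) - dotR d (coord (df (gamma u))) (vdiff (gamma v) (gamma u)))
       + dotR d (vdiff (df (gamma tj)) (df (gamma u))) (vdiff (gamma v) (gamma u))).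
    { unfold vdiff at 3. rewrite dot_minus_l. ring. }
    assert (H8 : eta * dist (gamma u) (gamma v) <= eta * (Lam v - Lam u))
      by (apply Rmult_le_compat_l; lra).
    rewrite E. eapply Rle_trans; [apply Rabs_triang|]. rewrite Rabs_Ropp. lra.
  - rewrite sum_lt_scal, (sum_lt_tele n (fun j => Lam (t j))), hn, h0.
    assert (Hx : 3 * eta * (Lam b - Lam a) <= 3 * eta * M) by (apply Rmult_le_compat_l; lra).
    lra.
Qed.
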